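(* Let $C$ be a consistent conjunctive transition formula of dimension $n$. Then $\hat\alpha(C)$ is a $\mathbb{Q}$-VASR abstraction of $C$ (i.e., if $\hat\alpha(C)=(S,V)$ then $C\Vdash_S V$). If moreover $C$ is expressed in $\exists$LRA, then $\hat\alpha(C)$ is a best $\mathbb{Q}$-VASR abstraction of $C$.
   Context: $\exists$LIRA formulas are built from atoms $s<t$, $s=t$ over linear terms with rational coefficients using $\land,\lor,\exists x\in\mathbb{Q},\exists x\in\mathbb{Z}$; $\exists$LRA omits quantification over $\mathbb{Z}$. A transition formula of dimension $n$ is a formula $F(\vec x,\vec x')$ with free variables $x_1,\dots,x_n,x_1',\dots,x_n'$, defining the transition system on $\mathbb{Q}^n$ with $\vec u\to_F\vec v$ iff $F(\vec u,\vec v)$ holds. A conjunctive transition formula is one that is a conjunction of atoms (possibly with additional existentially quantified variables); consistent means satisfiable. A $\mathbb{Q}$-VASR of dimension $d$ is a finite set $V\subseteq\{0,1\}^d\times\mathbb{Q}^d$; $\vec u\to_V\vec v$ iff $\vec v=\vec r*\vec u+\vec a$ for some $(\vec r,\vec a)\in V$ ($*$ pointwise product). A linear simulation $A\Vdash_S B$ between transition systems on $\mathbb{Q}^n$ and $\mathbb{Q}^m$ is $S\in\mathbb{Q}^{m\times n}$ with $\vec u\to_A\vec v\Rightarrow S\vec u\to_B S\vec v$. A $\mathbb{Q}$-VASR abstraction is a pair $(S,V)$ with $S\in\mathbb{Q}^{d\times n}$ and $V$ a $d$-dimensional $\mathbb{Q}$-VASR; it is an abstraction of $F$ if $F\Vdash_SV$.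 $(S^1,V^1)\preceq(S^2,V^2)$ iff there is a matrix $T$ with $V^1\Vdash_TV^2$ and $TS^1=S^2$. A best $\mathbb{Q}$-VASR abstraction of $F$ is an abstraction of $F$ that is $\preceq$ every $\mathbb{Q}$-VASR abstraction of $F$. $\hat\alpha(C)$: let $\mathit{Res}_C=\{(\vec s,a)\in\mathbb{Q}^n\times\mathbb{Q}: C\models\vec s\cdot\vec x'=a\}$ and $\mathit{Inc}_C=\{(\vec s,a): C\models\vec s\cdot\vec x'=\vec s\cdot\vec x+a\}$ (both vector spaces). With chosen bases $(\vec s_1,a_1),\dots,(\vec s_m,a_m)$ of $\mathit{Res}_C$ and $(\vec s_{m+1},a_{m+1}),\dots,(\vec s_d,a_d)$ of $\mathit{Inc}_C$, $\hat\alpha(C)=(S,\{(\vec r,\vec a)\})$ where $S\in\mathbb{Q}^{d\times n}$ has rows $\vec s_1,\dots,\vec s_d$, $\vec r$ consists of $m$ zeros followed by $d-m$ ones, and $\vec a=(a_1,\dots,a_d)$. *)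

(* Defs.v *)
From HB Require Import structures.
From mathcomp Require Import all_boot all_order all_algebra.
From Stdlib Require List.
Set Implicit Arguments. Unset Strict Implicit. Unset Printing Implicit Defensive.
Import Order.TTheory GRing.Theory Num.Theory.
Local Open Scope ring_scope.

Definition tsys (n : nat) := 'cV[rat]_n -> 'cV[rat]_n -> Prop.

Definition lin_simulation (n m : nat) (A : tsys n) (S : 'M[rat]_(m, n))
    (B : tsys m) : Prop :=
  forall u v, A u v -> B (S *m u) (S *m v).

(* An atom over the variables x (n of them), x' (n of them) and
   k auxiliary (existentially quantified) variables y:
      cx.x + cx'.x' + cy.y + c  < 0   (if strict)
      cx.x + cx'.x' + cy.y + c  = 0   (otherwise).
   Every atom s < t or s = t between linear terms with rational
   coefficients is (equivalent to) such an atom, with t - s moved left. *)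
Record atom (n k : nat) := Atom {
  at_x  : 'rV[rat]_n;
  at_x' : 'rV[rat]_n;
  at_y  : 'rV[rat]_k;
  at_c  : rat;
  at_strict : bool }.

Definition atom_holds (n k : nat) (a : atom n k)
    (u v : 'cV[rat]_n) (w : 'cV[rat]_k) : Prop :=
  let t := (at_x a *m u + at_x' a *m v + at_y a *m w) 0 0 + at_c a in
  (if at_strict a then t < 0 else t == 0) : bool.

Record ctf (n k : nat) := CTF {
  ctf_int   : 'I_k -> bool;
  ctf_atoms : seq (atom n k) }.

Definition ctf_sem (n k : nat) (C : ctf n k) : tsys n :=
  fun u v => exists w : 'cV[rat]_k,
    (forall i : 'I_k, ctf_int C i -> exists z : int, w i 0 = z%:~R) /\
    (forall a, Stdlib.Lists.List.In a (ctf_atoms C) -> atom_holds a u v w).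

Definition ctf_is_LRA (n k : nat) (C : ctf n k) : Prop :=
  forall i : 'I_k, ctf_int C i = false.

Definition consistent (n k : nat) (C : ctf n k) : Prop :=
  exists u v, ctf_sem C u v.

Definition vasr (d : nat) := seq ('cV[bool]_d * 'cV[rat]_d).

Definition vasr_sem (d : nat) (V : vasr d) : tsys d :=
  fun u v => exists r a, (r, a) \in V /\
    v = \col_i ((nat_of_bool (r i 0))%:R * u i 0 + a i 0).

Definition vasr_abstraction_of (n d : nat) (F : tsys n)
    (S : 'M[rat]_(d, n)) (V : vasr d) : Prop :=
  lin_simulation F S (vasr_sem V).

Definition vasr_abs_le (n d1 d2 : nat) (S1 : 'M[rat]_(d1, n)) (V1 : vasr d1)
    (S2 : 'M[rat]_(d2, n)) (V2 : vasr d2) : Prop :=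
  exists T : 'M[rat]_(d2, d1),
    lin_simulation (vasr_sem V1) T (vasr_sem V2) /\ T *m S1 = S2.

Definition best_vasr_abstraction_of (n d : nat) (F : tsys n)
    (S : 'M[rat]_(d, n)) (V : vasr d) : Prop :=
  vasr_abstraction_of F S V /\
  forall (d' : nat) (S' : 'M[rat]_(d', n)) (V' : vasr d'),
    vasr_abstraction_of F S' V' -> vasr_abs_le S V S' V'.

Definition Res (n k : nat) (C : ctf n k) (s : 'rV[rat]_n) (a : rat) : Prop :=
  forall u v, ctf_sem C u v -> s *m v = a%:M.

Definition Inc (n k : nat) (C : ctf n k) (s : 'rV[rat]_n) (a : rat) : Prop :=
  forall u v, ctf_sem C u v -> s *m v = s *m u + a%:M.

(* The pairs (row i B, c i) for i < m form a basis of the subspace P of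
   Q^n x Q (vectors (s,a) identified with the row vector [s a]):
   they are linearly independent, lie in P, and span P. *)
Definition is_basis_of (n m : nat) (P : 'rV[rat]_n -> rat -> Prop)
    (B : 'M[rat]_(m, n)) (c : 'cV[rat]_m) : Prop :=
  [/\ row_free (row_mx B c),
      forall i : 'I_m, P (row i B) (c i 0)
    & forall s a, P s a -> (row_mx s (a%:M : 'M[rat]_1) <= row_mx B c)%MS].

(* alpha-hat(C) = (S, {(r, a)}), where S has rows s_1..s_m (basis of Res_C)
   followed by s_{m+1}..s_d (basis of Inc_C), r = (0,..,0,1,..,1) and
   a = (a_1, .., a_d). *)
Definition alpha_hat_S (n m p : nat) (S1 : 'M[rat]_(m, n)) (S2 : 'M[rat]_(p, n))
  : 'M[rat]_(m + p, n) := col_mx S1 S2.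

Definition alpha_hat_V (m p : nat) (a1 : 'cV[rat]_m) (a2 : 'cV[rat]_p)
  : vasr (m + p) :=
  [:: (col_mx (const_mx false) (const_mx true), col_mx a1 a2)].

(* Main.v *)
Require Import Defs.
From HB Require Import structures.
From mathcomp Require Import all_boot all_order all_algebra.
Set Implicit Arguments. Unset Strict Implicit. Unset Printing Implicit Defensive.
From mathcomp Require Import ring lra.
From Stdlib Require Import Classical.
Import Order.TTheory GRing.Theory Num.Theory.
Local Open Scope ring_scope.

Definition comb (V : lmodType rat) (s : rat) (x y : V) := (1 - s) *: x + s *: y.

Lemma comb_comb (V : lmodType rat) (c s t : rat) (x q : V) :
  comb c (comb s x q) (comb t x q) = comb ((1 - c) * s + c * t) x q.
Proof.
rewrite /comb !scalerDr !scalerA addrACA -!scalerDl.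
congr (_ *: _ + _ *: _); ring.
Qed.

Lemma comb0 (V : lmodType rat) (x q : V) : comb 0 x q = x.
Proof. by rewrite /comb subr0 scale1r scale0r addr0. Qed.
Lemma comb1 (V : lmodType rat) (x q : V) : comb 1 x q = q.
Proof. by rewrite /comb subrr scale0r scale1r add0r. Qed.

Lemma comb_id1 (V : lmodType rat) (x q : V) (t : rat) : t != 0 -> comb t^-1 x (comb t x q) = q.
Proof.
move=> t0; rewrite -{1}(comb0 x q) comb_comb -[RHS](comb1 x q); congr comb; field; exact: t0.
Qed.

Lemma comb_id2 (V : lmodType rat) (x q : V) (s t : rat) : s != t ->
  comb (s / (s - t)) (comb s x q) (comb t x q) = x.
Proof.
move=> st; rewrite comb_comb -[RHS](comb0 x q); congr comb.
have : s - t != 0 by rewrite subr_eq0.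
move=> h; field; exact: h.
Qed.

Lemma geo (X : Type) (cb : rat -> X -> X -> X) (I : eqType) (Lf : I -> X -> bool)
  (P : X -> Prop) :
 (forall s x q, 0 < s < 1 -> P x -> P q -> P (cb s x q)) ->
 (forall i s x q, Lf i x -> Lf i q -> Lf i (cb s x q)) ->
 (forall x q t, t != 0 -> cb t^-1 x (cb t x q) = q) ->
 (forall x q s t, s != t -> cb (s/(s-t)) (cb s x q) (cb t x q) = x) ->
 forall W : seq I, (exists x, P x) -> (forall x, P x -> has (fun i => Lf i x) W) ->
 exists2 i, i \in W & forall x, P x -> Lf i x.
Proof.
move=> Pconv Laff Hid1 Hid2; elim=> [|w W IH] Hne Hcov.
  by case: Hne => x Px; have := Hcov x Px.
case: (classic (forall x, P x -> Lf w x)) => [Hall|Hnall].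
  by exists w => //; rewrite mem_head.
have [q [Pq Nq]] : exists q, P q /\ ~~ Lf w q.
  apply: NNPP => H; apply: Hnall => x Px; apply: NNPP => Nx; apply: H.
  by exists x; split => //; apply/negP.
have [i iW Hi] : exists2 i, i \in W & forall x, P x -> Lf i x.
  apply: IH => // x Px.
  case Hx: (has (fun i => Lf i x) W) => //; exfalso.
  have Lx : Lf w x by have := Hcov x Px; rewrite /= Hx orbF.
  pose t (k : nat) : rat := (k.+2)%:R^-1.
  have t0 k : 0 < t k < 1.
    rewrite /t invr_gt0 ltr0n /= invf_lt1 ?ltr0n // ltr1n //.
  have tn0 k : t k != 0 by have /andP[h _] := t0 k; rewrite gt_eqF.
  pose y k := cb (t k) x q.
  have Py k : P (y k) by apply: Pconv.
  have NLy k : ~~ Lf w (y k).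
    apply/negP => Ly; move: Nq; rewrite -(Hid1 x q (t k) (tn0 k)).
    by rewrite Laff.
  have Hy k : has (fun i => Lf i (y k)) W.
    by have := Hcov _ (Py k); rewrite /= (negbTE (NLy k)).
  pose g k := find (fun i => Lf i (y k)) W.
  pose s := map g (iota 0 (size W).+1).
  have : ~~ uniq s.
    apply/negP => Us.
    have H : {subset s <= iota 0 (size W)}.
      move=> z /mapP [k _ ->].
      by rewrite mem_iota add0n leq0n /= /g -has_find Hy.
    by have := uniq_leq_size Us H; rewrite size_map !size_iota ltnn.
  case/(uniqPn 0) => [a [b [ab]]]; rewrite size_map size_iota => bs.
  rewrite !(nth_map 0) ?size_iota ?(ltn_trans ab) // !nth_iota ?(ltn_trans ab) //.
  rewrite !add0n => gab.
  pose wi := nth w W (g a).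
  have La : Lf wi (y a) by exact: (nth_find w (Hy a)).
  have Lb : Lf wi (y b) by rewrite /wi gab; exact: (nth_find w (Hy b)).
  have tab : t a != t b.
    apply/negP => /eqP /invr_inj /eqP; rewrite eqr_nat eqSS => /eqP eab.
    by move: ab; rewrite eab ltnn.
  have : Lf wi x by rewrite -(Hid2 x q _ _ tab); apply: Laff.
  move=> Lwx.
  have wiW : wi \in W by rewrite /wi mem_nth // -has_find.
  by have := hasPn (negbT Hx) wi wiW; rewrite Lwx.
by exists i => //; rewrite in_cons iW orbT.
Qed.


Section Main.
Lemma ent (a b c : nat) (M : 'M[rat]_(a, b)) (v : 'M[rat]_(b, c)) i j :
  (M *m v) i j = (row i M *m v) 0 j.
Proof. by rewrite -row_mul [RHS]mxE. Qed.

Lemma sc11 (a : rat) : (a%:M : 'M[rat]_1) 0 0 = a.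
Proof. by rewrite mxE eqxx mulr1n. Qed.

Lemma m11 (A B : 'M[rat]_1) : A 0 0 = B 0 0 -> A = B.
Proof. by move=> h; apply/matrixP => i j; rewrite !ord1. Qed.

Lemma colsplit (m p : nat) (M N : 'cV[rat]_(m + p)) :
  usubmx M = usubmx N -> dsubmx M = dsubmx N -> M = N.
Proof. by move=> h1 h2; rewrite -(vsubmxK M) -(vsubmxK N) h1 h2. Qed.

Lemma span_dec (n m : nat) (B : 'M[rat]_(m, n)) (c : 'cV[rat]_m) s (a : rat) :
  (row_mx s (a%:M : 'M[rat]_1) <= row_mx B c)%MS ->
  s = (row_mx s a%:M *m pinvmx (row_mx B c)) *m B /\
  a%:M = (row_mx s a%:M *m pinvmx (row_mx B c)) *m c.
Proof.
move=> /mulmxKpV; set D := _ *m pinvmx _.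
by rewrite mul_mx_row => /eq_row_mx [-> ->].
Qed.

Lemma atom_comb (n k : nat) (aa : atom n k) (s : rat) (u1 u2 v1 v2 : 'cV[rat]_n) (w1 w2 : 'cV[rat]_k) :
  (at_x aa *m comb s u1 u2 + at_x' aa *m comb s v1 v2 + at_y aa *m comb s w1 w2) 0 0 + at_c aa
  = (1 - s) * ((at_x aa *m u1 + at_x' aa *m v1 + at_y aa *m w1) 0 0 + at_c aa)
    + s * ((at_x aa *m u2 + at_x' aa *m v2 + at_y aa *m w2) 0 0 + at_c aa).
Proof.
rewrite /comb !mulmxDr -!scalemxAr.
set A1 := (at_x aa *m u1). set A2 := (at_x aa *m u2).
set B1 := (at_x' aa *m v1). set B2 := (at_x' aa *m v2).
set C1 := (at_y aa *m w1). set C2 := (at_y aa *m w2).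
rewrite !mxE. ring.
Qed.
End Main.

Lemma rowmx0 (m p q : nat) (D : 'rV[rat]_p) (z : 'M[rat]_(m + p, q)) :
  row_mx (0 : 'rV[rat]_m) D *m z = D *m dsubmx z.
Proof. by rewrite -{1}(vsubmxK z) mul_row_col mul0mx add0r. Qed.

Lemma rowmx0' (m p q : nat) (D : 'rV[rat]_m) (z : 'M[rat]_(m + p, q)) :
  row_mx D (0 : 'rV[rat]_p) *m z = D *m usubmx z.
Proof. by rewrite -{1}(vsubmxK z) mul_row_col mul0mx addr0. Qed.

Theorem proposition1 (n k : nat) (C : ctf n k) (m p : nat)
    (S1 : 'M[rat]_(m, n)) (a1 : 'cV[rat]_m)
    (S2 : 'M[rat]_(p, n)) (a2 : 'cV[rat]_p) :
  consistent C ->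
  is_basis_of (Res C) S1 a1 ->
  is_basis_of (Inc C) S2 a2 ->
  vasr_abstraction_of (ctf_sem C) (alpha_hat_S S1 S2) (alpha_hat_V a1 a2) /\
  (ctf_is_LRA C ->
   best_vasr_abstraction_of (ctf_sem C) (alpha_hat_S S1 S2) (alpha_hat_V a1 a2)).
Proof.
move=> Hcons [_ HR1 HR3] [_ HI1 HI3].
have part1 : vasr_abstraction_of (ctf_sem C) (alpha_hat_S S1 S2) (alpha_hat_V a1 a2).
  move=> u v Huv.
  exists (col_mx (const_mx false) (const_mx true)), (col_mx a1 a2); split.
    by rewrite mem_head.
  rewrite /alpha_hat_S !mul_col_mx; apply: colsplit.
    rewrite col_mxKu; apply/matrixP => i j; rewrite ord1 ent (HR1 i u v Huv) sc11.
    rewrite !mxE (unsplitK (inl _ i) : split (lshift p i) = inl i) !mxE.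
    by rewrite mul0r add0r.
  rewrite col_mxKd; apply/matrixP => i j; rewrite ord1 ent (HI1 i u v Huv) mxE sc11 -ent.
  rewrite !mxE (unsplitK (inr _ i) : split (rshift m i) = inr i) !mxE.
  by rewrite mul1r.
split => // LRA; split => // d' S' V' Habs.
pose X := ('cV[rat]_n * 'cV[rat]_n)%type.
pose cb (s : rat) (x y : X) : X := (comb s x.1 y.1, comb s x.2 y.2).
pose P (x : X) := ctf_sem C x.1 x.2.
pose Lf (ra : 'cV[bool]_d' * 'cV[rat]_d') (x : X) :=
  S' *m x.2 == \col_i ((nat_of_bool (ra.1 i 0))%:R * (S' *m x.1) i 0 + ra.2 i 0).
have [[r' a'] Hin HL] : exists2 ra, ra \in V' & forall x, P x -> Lf ra x.
  apply: (@geo X cb _ Lf P).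
  - move=> s [u1 v1] [u2 v2] /andP[s0 s1] [w1 [_ H1]] [w2 [_ H2]].
    exists (comb s w1 w2); split; first by move=> i; rewrite LRA.
    move=> aa ina; have := H1 aa ina; have := H2 aa ina.
    rewrite /atom_holds /= atom_comb.
    case: (at_strict aa) => /=.
      move=> h2 h1; nra.
    by move=> /eqP -> /eqP ->; rewrite !mulr0 addr0.
  - move=> ra s [u1 v1] [u2 v2]; rewrite /Lf /= => /eqP h1 /eqP h2; apply/eqP.
    rewrite /comb !mulmxDr -!scalemxAr h1 h2.
    set A1 := S' *m u1; set A2 := S' *m u2.
    apply/matrixP => i j; rewrite !mxE; ring.
  - by move=> [x1 x2] [q1 q2] t t0; rewrite /cb /= !comb_id1.
  - by move=> [x1 x2] [q1 q2] s t st; rewrite /cb /= !comb_id2.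
  - by case: Hcons => u [v h]; exists (u, v).
  - move=> [u v] Px; have [r [a [ra E]]] := Habs u v Px.
    by apply/hasP; exists (r, a) => //; rewrite /Lf /= E.
have HLuv u v : ctf_sem C u v -> S' *m v =
    \col_i ((nat_of_bool (r' i 0))%:R * (S' *m u) i 0 + a' i 0).
  by move=> h; apply/eqP; exact: (HL (u, v) h).
have Rrow i : r' i 0 = false -> Res C (row i S') (a' i 0).
  move=> ri u v h; apply: m11; rewrite -row_mul (HLuv _ _ h) mxE mxE ri /= mul0r add0r sc11.
  by [].
have Irow i : r' i 0 = true -> Inc C (row i S') (a' i 0).
  move=> ri u v h; apply: m11; rewrite -row_mul (HLuv _ _ h) mxE mxE ri /= mul1r.
  by rewrite [RHS]mxE sc11 -row_mul !mxE.
pose E i := row_mx (row i S') ((a' i 0)%:M : 'M[rat]_1).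
pose D1 i := E i *m pinvmx (row_mx S1 a1).
pose D2 i := E i *m pinvmx (row_mx S2 a2).
pose T := \matrix_(i, j) (if r' i 0 then row_mx (0 : 'rV[rat]_m) (D2 i)
                           else row_mx (D1 i) (0 : 'rV[rat]_p)) 0 j.
have rowT i : row i T = if r' i 0 then row_mx 0 (D2 i) else row_mx (D1 i) 0.
  by apply/rowP => j; rewrite !mxE.
have D1P i : r' i 0 = false -> row i S' = D1 i *m S1 /\ (a' i 0)%:M = D1 i *m a1.
  by move=> ri; apply: span_dec; apply: HR3; apply: Rrow.
have D2P i : r' i 0 = true -> row i S' = D2 i *m S2 /\ (a' i 0)%:M = D2 i *m a2.
  by move=> ri; apply: span_dec; apply: HI3; apply: Irow.
exists T; split; last first.
  apply/row_matrixP => i; rewrite row_mul rowT /alpha_hat_S.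
  case ri: (r' i 0).
    by rewrite rowmx0 col_mxKd (D2P i ri).1.
  by rewrite rowmx0' col_mxKu (D1P i ri).1.
move=> x y [r [a [ra Hy]]].
move: ra; rewrite mem_seq1 => /eqP [er ea]; subst r a.
exists r', a'; split => //.
have yu : usubmx y = a1.
  apply/matrixP => i j; rewrite ord1 Hy !mxE.
  by rewrite (unsplitK (inl _ i) : split (lshift p i) = inl i) !mxE mul0r add0r.
have yd : dsubmx y = dsubmx x + a2.
  apply/matrixP => i j; rewrite ord1 Hy !mxE.
  by rewrite (unsplitK (inr _ i) : split (rshift m i) = inr i) !mxE mul1r.
apply/matrixP => i j; rewrite ord1 [RHS]mxE ent [(T *m x) i 0]ent rowT.
case ri: (r' i 0) => /=.
  rewrite !rowmx0 yd mulmxDr -(D2P i ri).2 mul1r mxE sc11 //.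
rewrite !rowmx0' yu -(D1P i ri).2 mul0r add0r sc11 //.
Qed.
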